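(* Let $t>0$ and let $P,Q$ be $t$-convex polygons in the Lorentz plane with parallel edges, i.e. with the same inward unit normals $\eta_1,\dots,\eta_n$ of their fundamental edges, and with support vectors $h(P)=(h_1(P),\dots,h_n(P))$, $h(Q)=(h_1(Q),\dots,h_n(Q))$. Then $$\operatorname{coarea}(P,Q)^2\leq \operatorname{coarea}(P)\operatorname{coarea}(Q),$$ with equality if and only if $P$ and $Q$ are homothetic, i.e. there is $\lambda>0$ with $h_i(P)=\lambda h_i(Q)$ for all $i$.
   Context: Lorentz plane: $\mathbb{R}^2$ with $\langle x,y\rangle_1=x_1y_1-x_2y_2$; $\mathbb{H}=\{x:\langle x,x\rangle_1=-1,x_2>0\}$; $H_s=\begin{pmatrix}\cosh s&\sinh s\\ \sinh s&\cosh s\end{pmatrix}$. A $t$-convex polygon is the intersection, over $k\in\mathbb{Z}$ and $i=1,\dots,n$, of the half-planes $\{x:\langle x,H_t^k\eta_i\rangle_1\le -h_i\}$, for pairwise distinct $\eta_i\in\mathbb{H}$ and $h_i>0$, taken minimal so each $\eta_i$ is the inward normal of a genuine edge. Its fundamental edges are labeled so that $\eta_1$ is the normal of a chosen edge, $\eta_2$ the normal of the edge to its right, etc., up to $\eta_{n+1}=H_t\eta_1$; $h_i(P)$ is the support number of the edge with normal $\eta_i$; $\varphi_i>0$ is defined by $\cosh\varphi_i=-\langle\eta_i,\eta_{i+1}\rangle_1$, so $\varphi_1+\dots+\varphi_n=t$. With indices cyclic mod $n$, the mixed coarea of $h,k\in\mathbb{R}^n$ is $\operatorname{coarea}(h,k)=\frac12\sum_{i=1}^n\big(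 h_i\frac{k_i\cosh\varphi_{i-1}-k_{i-1}}{\sinh\varphi_{i-1}}+h_i\frac{k_i\cosh\varphi_i-k_{i+1}}{\sinh\varphi_i}\big)$; $\operatorname{coarea}(P,Q):=\operatorname{coarea}(h(P),h(Q))$ and $\operatorname{coarea}(P):=\operatorname{coarea}(P,P)$ (which equals half the sum over fundamental edges of support number times Lorentzian edge length). *)

(* Defs.v *)
From Stdlib Require Import Reals Lra Lia List.
Import ListNotations.
Open Scope R_scope.

Definition pt := (R * R)%type.

Definition lprod (x y : pt) : R := fst x * fst y - snd x * snd y.

Definition in_H (x : pt) : Prop := lprod x x = -1 /\ 0 < snd x.

Definition boost (s : R) (x : pt) : pt :=
  (cosh s * fst x + sinh s * snd x, sinh s * fst x + cosh s * snd x).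

(* H_t^k = H_{k t} for k : Z. *)
Definition boost_pow (t : R) (k : Z) (x : pt) : pt := boost (IZR k * t) x.

(* The region cut out by the half-planes <x, H_t^k eta_i> <= -h_i,
   k in Z, 0 <= i < n (indices 0-based: eta 0 .. eta (n-1)). *)
Definition tpoly (t : R) (n : nat) (eta : nat -> pt) (h : nat -> R) (x : pt) : Prop :=
  forall (k : Z) (i : nat), (i < n)%nat -> lprod x (boost_pow t k (eta i)) <= - h i.

Definition genuine_edge (t : R) (n : nat) (eta : nat -> pt) (h : nat -> R) (i : nat) : Prop :=
  exists x y : pt, x <> y /\ tpoly t n eta h x /\ tpoly t n eta h y /\
    lprod x (eta i) = - h i /\ lprod y (eta i) = - h i.

(* Labeling of the fundamental edges: eta_0, ..., eta_{n-1} are consecutive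
   edge normals, and the next one after eta_{n-1} is H_t eta_0. Writing points of H
   as (sinh a, cosh a), H_t shifts a by t, so this means
   a_0 < a_1 < ... < a_{n-1} < a_0 + t. *)
Definition labeled (t : R) (n : nat) (eta : nat -> pt) : Prop :=
  exists a : nat -> R,
    (forall i, (i < n)%nat -> eta i = (sinh (a i), cosh (a i))) /\
    (forall i, (i + 1 < n)%nat -> a i < a (i + 1)%nat) /\
    a (n - 1)%nat < a O + t.

Definition tconvex_data (t : R) (n : nat) (eta : nat -> pt) (h : nat -> R) : Prop :=
  (1 <= n)%nat /\
  (forall i, (i < n)%nat -> in_H (eta i)) /\
  (forall i j, (i < n)%nat -> (j < n)%nat -> i <> j -> eta i <> eta j) /\
  (forall i, (i < n)%nat -> 0 < h i) /\
  labeled t n eta /\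
  (forall i, (i < n)%nat -> genuine_edge t n eta h i).

Definition nxt (n i : nat) : nat := ((i + 1) mod n)%nat.
Definition prv (n i : nat) : nat := ((i + n - 1) mod n)%nat.

Definition eta_next (t : R) (n : nat) (eta : nat -> pt) (i : nat) : pt :=
  if Nat.eqb (i + 1) n then boost t (eta O) else eta (i + 1)%nat.

Definition cosh_phi (t : R) (n : nat) (eta : nat -> pt) (i : nat) : R :=
  - lprod (eta i) (eta_next t n eta i).
Definition sinh_phi (t : R) (n : nat) (eta : nat -> pt) (i : nat) : R :=
  sqrt (cosh_phi t n eta i ^ 2 - 1).

Definition sumn_R (n : nat) (f : nat -> R) : R :=
  fold_right Rplus 0 (map f (seq 0 n)).

Definition coarea (t : R) (n : nat) (eta : nat -> pt) (h k : nat -> R) : R :=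
  / 2 * sumn_R n (fun i =>
    h i * (k i * cosh_phi t n eta (prv n i) - k (prv n i)) / sinh_phi t n eta (prv n i)
  + h i * (k i * cosh_phi t n eta i - k (nxt n i)) / sinh_phi t n eta i).

(* Main.v *)
Require Import Defs.
From Stdlib Require Import Reals Lra Lia Psatz List.
Import ListNotations.
Open Scope R_scope.

Lemma fold_plus_acc (l : list R) (a : R) :
  fold_right Rplus a l = fold_right Rplus 0 l + a.
Proof. induction l; simpl; [lra| rewrite IHl; lra]. Qed.

Lemma sumn_S n f : sumn_R (S n) f = sumn_R n f + f n.
Proof.
  unfold sumn_R. rewrite seq_S, map_app, fold_right_app. simpl.
  rewrite fold_plus_acc. lra.
Qed.

Lemma sumn_Sl n f : sumn_R (S n) f = f O + sumn_R n (fun i => f (S i)).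
Proof.
  unfold sumn_R. simpl. f_equal. rewrite <- seq_shift, map_map. reflexivity.
Qed.

Lemma sumn_ext n f g : (forall i, (i < n)%nat -> f i = g i) -> sumn_R n f = sumn_R n g.
Proof.
  induction n; intros H; [reflexivity|].
  rewrite !sumn_S, IHn by (intros; apply H; lia). rewrite H by lia. reflexivity.
Qed.

Lemma sumn_lin n f g y : sumn_R n (fun i => f i + y * g i) = sumn_R n f + y * sumn_R n g.
Proof. induction n; [unfold sumn_R; simpl; lra|]. rewrite !sumn_S, IHn. lra. Qed.

Lemma sumn_nonneg n f : (forall i, (i < n)%nat -> 0 <= f i) -> 0 <= sumn_R n f.
Proof.
  induction n; intros H; [unfold sumn_R; simpl; lra|].
  rewrite sumn_S. assert (0 <= f n) by (apply H; lia).
  assert (0 <= sumn_R n f) by (apply IHn; intros; apply H; lia). lra.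
Qed.

Lemma sumn_zero n f : (forall i, (i < n)%nat -> 0 <= f i) -> sumn_R n f = 0 ->
  forall i, (i < n)%nat -> f i = 0.
Proof.
  induction n; intros H Hs i Hi; [lia|].
  rewrite sumn_S in Hs. assert (0 <= f n) by (apply H; lia).
  assert (0 <= sumn_R n f) by (apply sumn_nonneg; intros; apply H; lia).
  destruct (Nat.eq_dec i n) as [->|]; [lra|].
  apply IHn; [intros; apply H; lia | lra | lia].
Qed.

Lemma nxt_lt n i : (1 <= n)%nat -> (nxt n i < n)%nat.
Proof. intros; unfold nxt; apply Nat.mod_upper_bound; lia. Qed.
Lemma prv_lt n i : (1 <= n)%nat -> (prv n i < n)%nat.
Proof. intros; unfold prv; apply Nat.mod_upper_bound; lia. Qed.

Lemma prv_S m i : (i < m)%nat -> prv (S m) (S i) = i.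
Proof. intros. unfold prv. replace (S i + S m - 1)%nat with (i + 1 * S m)%nat by lia.
  rewrite Nat.Div0.mod_add. apply Nat.mod_small; lia. Qed.
Lemma prv_0 m : prv (S m) O = m.
Proof. unfold prv. replace (0 + S m - 1)%nat with m by lia. apply Nat.mod_small; lia. Qed.

Lemma nxt_prv n i : (i < n)%nat -> nxt n (prv n i) = i.
Proof.
  intros Hi. destruct n as [|m]; [lia|]. unfold nxt. destruct i as [|i].
  - rewrite prv_0. replace (m+1)%nat with (S m) by lia. apply Nat.mod_same; lia.
  - rewrite prv_S by lia. replace (i+1)%nat with (S i) by lia. apply Nat.mod_small; lia.
Qed.

Lemma sumn_prv n f : (1 <= n)%nat -> sumn_R n (fun i => f (prv n i)) = sumn_R n f.
Proof.
  intros Hn. destruct n as [|m]; [lia|].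
  rewrite sumn_Sl, prv_0, sumn_S.
  rewrite (sumn_ext m _ f) by (intros; rewrite prv_S by lia; reflexivity). lra.
Qed.

Lemma sumn_scal n f y : sumn_R n (fun i => y * f i) = y * sumn_R n f.
Proof. induction n; [unfold sumn_R; simpl; lra|]. rewrite !sumn_S, IHn. lra. Qed.

Lemma div_nonneg a b : 0 <= a -> 0 < b -> 0 <= a / b.
Proof. intros. unfold Rdiv. apply Rmult_le_pos; [lra|]. apply Rlt_le, Rinv_0_lt_compat; lra. Qed.

Lemma key_hyp a b : a < b -> 1 < - lprod (sinh a, cosh a) (sinh b, cosh b).
Proof.
  intros Hab. unfold lprod, sinh, cosh; simpl. rewrite !exp_Ropp.
  assert (HE := exp_pos a). assert (HF := exp_pos b). assert (Hl := exp_increasing _ _ Hab).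
  set (E := exp a) in *. set (F := exp b) in *.
  replace (- ((E - / E) / 2 * ((F - / F) / 2) - (E + / E) / 2 * ((F + / F) / 2)))
    with (((E - F)^2 / (E * F) + 2) / 2) by (field; lra).
  assert (0 < (E - F)^2 / (E*F)).
  { apply Rdiv_lt_0_compat; [|nra]. nra. }
  lra.
Qed.

Lemma boost_hyp t a : boost t (sinh a, cosh a) = (sinh (a + t), cosh (a + t)).
Proof.
  unfold boost, sinh, cosh; simpl. rewrite Ropp_plus_distr, !exp_plus, !exp_Ropp.
  assert (HE := exp_pos a). assert (HF := exp_pos t).
  f_equal; field; lra.
Qed.

Lemma cosh_phi_gt1 t n eta i : labeled t n eta -> (i < n)%nat -> 1 < cosh_phi t n eta i.
Proof.
  intros [a [Ha [Hinc Hlast]]] Hi. unfold cosh_phi, eta_next.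
  destruct (Nat.eqb_spec (i+1) n) as [E|E].
  - rewrite Ha by lia. rewrite (Ha O) by lia. rewrite boost_hyp. apply key_hyp.
    replace i with (n-1)%nat by lia. exact Hlast.
  - rewrite !Ha by lia. apply key_hyp. apply Hinc. lia.
Qed.

Lemma sinh_phi_pos t n eta i : labeled t n eta -> (i < n)%nat -> 0 < sinh_phi t n eta i.
Proof.
  intros Hl Hi. unfold sinh_phi. apply sqrt_lt_R0.
  pose proof (cosh_phi_gt1 t n eta i Hl Hi). nra.
Qed.

Definition Bf t n eta (h k : nat -> R) : R :=
  / 2 * sumn_R n (fun i =>
    (cosh_phi t n eta i * (h i * k i + h (nxt n i) * k (nxt n i))
     - h i * k (nxt n i) - h (nxt n i) * k i) / sinh_phi t n eta i).

Lemma coarea_Bf t n eta h k : (1 <= n)%nat -> coarea t n eta h k = Bf t n eta h k.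
Proof.
  intros Hn. unfold coarea, Bf. f_equal.
  set (c := cosh_phi t n eta). set (s := sinh_phi t n eta).
  set (Z := fun j => h (nxt n j) * (k (nxt n j) * c j - k j) / s j).
  set (Y := fun i => h i * (k i * c i - k (nxt n i)) / s i).
  transitivity (sumn_R n (fun i => Z (prv n i) + 1 * Y i)).
  { apply sumn_ext. intros i Hi. unfold Z, Y. rewrite nxt_prv by exact Hi. ring. }
  rewrite sumn_lin, sumn_prv by exact Hn. rewrite <- sumn_lin.
  apply sumn_ext. intros i Hi. unfold Z, Y. unfold Rdiv. ring.
Qed.

Lemma Bf_expand t n eta h k x :
  Bf t n eta (fun i => h i + x * k i) (fun i => h i + x * k i)
  = Bf t n eta h h + 2 * x * Bf t n eta h k + x^2 * Bf t n eta k k.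
Proof.
  unfold Bf.
  set (c := cosh_phi t n eta). set (s := sinh_phi t n eta).
  set (F := fun h k i => (c i * (h i * k i + h (nxt n i) * k (nxt n i))
     - h i * k (nxt n i) - h (nxt n i) * k i) / s i).
  change (/ 2 * sumn_R n (F (fun i => h i + x * k i) (fun i => h i + x * k i)) =
    / 2 * sumn_R n (F h h) + 2 * x * (/ 2 * sumn_R n (F h k)) + x ^ 2 * (/ 2 * sumn_R n (F k k))).
  transitivity (/2 * sumn_R n (fun i => (F h h i + (2*x) * F h k i) + x^2 * F k k i)).
  { f_equal. apply sumn_ext. intros i _. unfold F. unfold Rdiv. ring. }
  rewrite !sumn_lin. ring.
Qed.

Lemma Bf_nonneg t n eta g : labeled t n eta -> 0 <= Bf t n eta g g.
Proof.
  intros Hl. unfold Bf. apply Rmult_le_pos; [lra|]. apply sumn_nonneg. intros i Hi.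
  pose proof (cosh_phi_gt1 t n eta i Hl Hi). pose proof (sinh_phi_pos t n eta i Hl Hi).
  apply div_nonneg; [|lra].
  set (a := g i) in *. set (b := g (nxt n i)) in *. set (c := cosh_phi t n eta i) in *.
  assert (0 <= (c-1)*(a*a+b*b)) by (apply Rmult_le_pos; [lra|pose proof (Rle_0_sqr a); pose proof (Rle_0_sqr b); unfold Rsqr in *; lra]).
  pose proof (Rle_0_sqr (a-b)); unfold Rsqr in *; nra.
Qed.

Lemma Bf_zero t n eta g : labeled t n eta -> Bf t n eta g g = 0 ->
  forall i, (i < n)%nat -> g i = 0.
Proof.
  intros Hl H0 i Hi. unfold Bf in H0.
  assert (Hs : sumn_R n (fun i =>
    (cosh_phi t n eta i * (g i * g i + g (nxt n i) * g (nxt n i))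
     - g i * g (nxt n i) - g (nxt n i) * g i) / sinh_phi t n eta i) = 0) by lra.
  assert (Hnn : forall i, (i < n)%nat -> 0 <= (cosh_phi t n eta i * (g i * g i + g (nxt n i) * g (nxt n i))
     - g i * g (nxt n i) - g (nxt n i) * g i) / sinh_phi t n eta i).
  { intros j Hj. pose proof (cosh_phi_gt1 t n eta j Hl Hj). pose proof (sinh_phi_pos t n eta j Hl Hj).
    apply div_nonneg; [|lra]. set (a := g j) in *. set (b := g (nxt n j)) in *. set (c := cosh_phi t n eta j) in *.
    assert (0 <= (c-1)*(a*a+b*b)) by (apply Rmult_le_pos; [lra|pose proof (Rle_0_sqr a); pose proof (Rle_0_sqr b); unfold Rsqr in *; lra]).
  pose proof (Rle_0_sqr (a-b)); unfold Rsqr in *; nra. }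
  pose proof (sumn_zero _ _ Hnn Hs i Hi) as Hz.
  pose proof (cosh_phi_gt1 t n eta i Hl Hi). pose proof (sinh_phi_pos t n eta i Hl Hi).
  set (c := cosh_phi t n eta i) in *. set (s := sinh_phi t n eta i) in *.
  set (a := g i) in *. set (b := g (nxt n i)) in *.
  assert (c * (a * a + b * b) - a * b - b * a = 0).
  { unfold Rdiv in Hz. apply Rmult_integral in Hz. destruct Hz as [Hz|Hz]; [exact Hz|].
    exfalso. fold s in Hz. apply (Rinv_neq_0_compat s); [lra|exact Hz]. }
  assert (0 <= (c-1)*(b*b)) by (apply Rmult_le_pos; [lra|pose proof (Rle_0_sqr b); unfold Rsqr in *; lra]).
  pose proof (Rle_0_sqr (a-b)); unfold Rsqr in *.
  assert ((c-1)*(a*a) <= 0) by nra.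
  assert (a*a <= 0). { apply (Rmult_le_reg_l (c-1)); nra. }
  nra.
Qed.

Lemma Bf_ext t n eta h h' k k' : (1 <= n)%nat ->
  (forall i, (i < n)%nat -> h i = h' i) -> (forall i, (i < n)%nat -> k i = k' i) ->
  Bf t n eta h k = Bf t n eta h' k'.
Proof.
  intros Hn Hh Hk. unfold Bf. f_equal. apply sumn_ext. intros i Hi.
  pose proof (nxt_lt n i Hn). rewrite !Hh, !Hk by assumption. reflexivity.
Qed.

Lemma Bf_scal t n eta k lam :
  Bf t n eta (fun i => lam * k i) k = lam * Bf t n eta k k /\
  Bf t n eta (fun i => lam * k i) (fun i => lam * k i) = lam^2 * Bf t n eta k k.
Proof.
  unfold Bf.
  set (F := fun i => (cosh_phi t n eta i * (k i * k i + k (nxt n i) * k (nxt n i))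
     - k i * k (nxt n i) - k (nxt n i) * k i) / sinh_phi t n eta i).
  split.
  - transitivity (/2 * sumn_R n (fun i => lam * F i)).
    { f_equal. apply sumn_ext. intros. unfold F, Rdiv. ring. }
    rewrite sumn_scal. ring.
  - transitivity (/2 * sumn_R n (fun i => lam^2 * F i)).
    { f_equal. apply sumn_ext. intros. unfold F, Rdiv. ring. }
    rewrite sumn_scal. ring.
Qed.

Theorem corollary5p3 (t : R) (n : nat) (eta : nat -> pt) (hP hQ : nat -> R) :
  0 < t ->
  tconvex_data t n eta hP ->
  tconvex_data t n eta hQ ->
  (coarea t n eta hP hQ) ^ 2 <= coarea t n eta hP hP * coarea t n eta hQ hQ /\
  ((coarea t n eta hP hQ) ^ 2 = coarea t n eta hP hP * coarea t n eta hQ hQ <->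
   exists lam : R, 0 < lam /\ forall i, (i < n)%nat -> hP i = lam * hQ i).
Proof.
  intros Ht [Hn [_ [_ [HPpos [Hl _]]]]] [_ [_ [_ [HQpos _]]]].
  rewrite !coarea_Bf by exact Hn.
  set (A := Bf t n eta hP hP). set (B := Bf t n eta hP hQ). set (C := Bf t n eta hQ hQ).
  assert (HC : 0 < C).
  { destruct (Bf_nonneg t n eta hQ Hl) as [H|H]; [exact H|].
    exfalso. pose proof (Bf_zero t n eta hQ Hl (eq_sym H) O ltac:(lia)).
    pose proof (HQpos O ltac:(lia)). lra. }
  assert (Hq : forall x, 0 <= A + 2 * x * B + x^2 * C).
  { intros x. unfold A, B, C. rewrite <- Bf_expand. apply Bf_nonneg, Hl. }
  assert (Hx := Hq (- B / C)).
  replace (A + 2 * (- B / C) * B + (- B / C)^2 * C) with (A - B^2 / C) in Hx by (field; lra).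
  assert (HB2 : B^2 = B^2 / C * C) by (field; lra).
  assert (Hineq : B^2 <= A * C).
  { rewrite HB2. apply Rmult_le_compat_r; lra. }
  split; [exact Hineq|]. split.
  - intros Heq.
    assert (H0 : Bf t n eta (fun i => hP i + (- B / C) * hQ i) (fun i => hP i + (- B / C) * hQ i) = 0).
    { rewrite Bf_expand. fold A B C.
      replace (A + 2 * (- B / C) * B + (- B / C)^2 * C) with (A - B^2 / C) by (field; lra).
      rewrite Heq. field; lra. }
    pose proof (Bf_zero t n eta _ Hl H0) as Hz.
    exists (B / C). split.
    + pose proof (Hz O ltac:(lia)). pose proof (HPpos O ltac:(lia)). pose proof (HQpos O ltac:(lia)).
      destruct (Rle_or_lt (B / C) 0) as [Hle|]; [|assumption].
      exfalso. assert (hP O = B / C * hQ O) by (unfold Rdiv in *; lra). nra.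
    + intros i Hi. pose proof (Hz i Hi). unfold Rdiv in *. lra.
  - intros [lam [Hlam Heq]].
    unfold A, B.
    rewrite (Bf_ext t n eta hP (fun i => lam * hQ i) hQ hQ Hn Heq (fun _ _ => eq_refl)).
    rewrite (Bf_ext t n eta hP (fun i => lam * hQ i) hP (fun i => lam * hQ i) Hn Heq Heq).
    destruct (Bf_scal t n eta hQ lam) as [E1 E2]. rewrite E1, E2. fold C. ring.
Qed.
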